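(* Let $(s_i)$ be in the dominant chamber. Under the bijection $(s_i)\mapsto(\gamma_1,\ldots,\gamma_{n-1})$ described in the context, the length of $(s_i)$ is $\sum_{i=1}^{n-1} (n-i)\gamma_i$.
   Context: Let $W$ be the affine Weyl group of type $\widetilde{A}_{n-1}$, with vertex set $I$ of its extended Dynkin graph (a cycle on $n$ vertices, indexed by $\mathbb{Z}/n$), acting on configuration space $\mathbb{R}^I$ by the simple reflections $s_i$ (in the basis of fundamental coweights: $s_i$ negates coordinate $i$ and adds $v_i$ to the two adjacent coordinates). For $w\in W$, $l(w)$ denotes the length, i.e. the minimal number of simple reflections whose product is $w$. Let $\tilde{S}_n$ be the set of permutations $i \mapsto s_i$ of the integers such that $s_{i+n} = s_i + n$ and $\sum_{i=1}^n s_i = \sum_{i=1}^n i$. The map $\partial : \tilde{S}_n \to \mathbb{R}^I$, $(\partial s)_i = s_i - s_{i-1}$, is injective with image $W \cdot (1,1,\ldots,1)$; since $W$ acts freely on $(1,\ldots,1)$, this identifies $\tilde{S}_n$ with $W$ (an element $s$ corresponds to the $w\in W$ with $\partial s = w\cdot(1,\ldots,1)$), and the length of $s$ means $l(w)$. Under this identification the dominant chamber consists of those $s$ with $s_1 < s_2 < \cdots < s_n$. Given $(s_i)$ in the dominant chamber, define $(\gamma_1, \ldots, \gamma_{n-1})$ as follows: for $1 \le i \le n-1$, let $U_i$ be the set of integers $t$ with $t < s_{i+1}$ and $t \not\equiv s_{i+1}, s_{i+2}, \ldots, s_n \pmod n$; number its elements $u_0 > u_1 > u_2 > \cdots$; then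 $s_i \in U_i$, and $\gamma_i$ is defined by $s_i = u_{\gamma_i}$. This gives a bijection between the dominant chamber and $\mathbb{Z}_{\geq 0}^{n-1}$. *)

(* Defs.v *)
From HB Require Import structures.
From mathcomp Require Import all_boot all_order all_algebra.
Set Implicit Arguments. Unset Strict Implicit. Unset Printing Implicit Defensive.
Import Order.TTheory GRing.Theory Num.Theory.
Local Open Scope ring_scope.

Definition affine_perm (n : nat) (s : int -> int) : Prop :=
  bijective s /\
  (forall i : int, s (i + n%:Z) = s i + n%:Z) /\
  \sum_(1 <= i < n.+1) s (Posz i) = \sum_(1 <= i < n.+1) i%:Z.

Definition dominant (n : nat) (s : int -> int) : Prop :=
  forall i j : nat, (1 <= i)%N -> (i < j)%N -> (j <= n)%N -> s (Posz i) < s (Posz j).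

(* Configuration space (integer points of R^I), I = Z/n represented by 'I_n. *)
Definition config (n : nat) := {ffun 'I_n -> int}.

(* Simple reflection s_i: negates coordinate i and adds v_i to the two
   neighbouring coordinates i-1, i+1 (mod n) (for n = 2 the two neighbours
   coincide, which gives 2 v_i, the Cartan matrix of type \tilde A_1). *)
Definition sref (n : nat) (i : 'I_n) (v : config n) : config n :=
  [ffun j : 'I_n => if j == i then - v i
                    else v j + (((j.+1 %% n == i) : nat) + ((i.+1 %% n == j) : nat))%N%:Z * v i].

Definition word_act (n : nat) (w : seq 'I_n) (v : config n) : config n :=
  foldr (@sref n) v w.

Definition ones (n : nat) : config n := [ffun _ => 1].

Definition dpart (n : nat) (s : int -> int) : config n :=
  [ffun j : 'I_n => s (Posz (nat_of_ord j)) - s (Posz (nat_of_ord j) - 1)].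

(* The length of s is l(w) where w \in W is the unique element with
   w . (1,...,1) = \partial s; since W acts freely on (1,...,1), the words
   representing w are exactly the words u with u . (1,...,1) = \partial s.
   [is_length n s k] : k is the minimal length of such a word. *)
Definition is_length (n : nat) (s : int -> int) (k : nat) : Prop :=
  (exists w : seq 'I_n, size w = k /\ word_act w (ones n) = dpart n s) /\
  (forall w : seq 'I_n, word_act w (ones n) = dpart n s -> (k <= size w)%N).

(* gamma_i : index of s_i in U_i = {t < s_{i+1} | t not= s_{i+1},...,s_n mod n}
   numbered decreasingly u_0 > u_1 > ...; i.e. the number of elements of U_i
   strictly greater than s_i, i.e. of integers t with s_i < t < s_{i+1} and
   t not congruent to s_{i+1}, ..., s_n mod n. *)
Definition in_U (n : nat) (s : int -> int) (i : nat) (t : int) : bool :=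
  (t < s (Posz i.+1))%R &&
  all (fun j : nat => ~~ (n%:Z %| t - s (Posz j))%Z) (iota i.+1 (n - i)).

Definition gamma (n : nat) (s : int -> int) (i : nat) : nat :=
  count (fun k : nat => in_U n s i (s (Posz i) + 1 + k%:Z))
        (iota 0 (absz (s (Posz i.+1) - s (Posz i) - 1)%R)).

(* Main.v *)
Require Import Defs.
From mathcomp Require Import all_boot all_order all_algebra.
From mathcomp Require Import zify ring lra.
Set Implicit Arguments. Unset Strict Implicit. Unset Printing Implicit Defensive.
Import Order.TTheory GRing.Theory Num.Theory.
Local Open Scope ring_scope.

Definition Dx (n : nat) (x : nat -> int) : config n :=
  [ffun j : 'I_n => x j - (if (j == 0%N :> nat) then x n.-1 - n%:Z else x (j.-1))].
Definition sig (n i a : nat) : nat :=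
  if i == 0%N then (if a == 0%N then n.-1 else if a == n.-1 then 0%N else a)
  else (if a == i.-1 then i else if a == i then i.-1 else a).
Definition ev (n i a : nat) : int :=
  if i == 0%N then (if a == 0%N then n%:Z else if a == n.-1 then - n%:Z else 0) else 0.
Definition sw (n i : nat) (x : nat -> int) (a : nat) : int :=
  x (sig n i a) + ev n i (sig n i a).

Lemma modS_eq (n j : nat) : (j < n)%N -> (j.+1 %% n = if j == n.-1 then 0 else j.+1)%N.
Proof.
move=> jn; case: eqP => [->|h].
  by rewrite prednK ?modnn //; lia.
by rewrite modn_small //; lia.
Qed.

Ltac splitall := repeat (match goal with
  | |- context [if ?b then _ else _] => lazymatch b with context [if _ then _ else _] => fail | _ => idtac end;
      case: (boolP b) => /= ?; try (exfalso; lia)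
  | |- context [nat_of_bool ?b] => case: (boolP b) => /= ?; try (exfalso; lia)
  end).
Ltac normx x := repeat match goal with |- context [x ?p] => match goal with |- context [x ?q] =>
   assert_fails (assert (p = q) by reflexivity); let e := fresh in
   (have e : x p = x q by congr x; lia); rewrite e; clear e end end.
Lemma swapD (n : nat) (n2 : (2 <= n)%N) (x : nat -> int) (i : 'I_n) :
  sref i (Dx n x) = Dx n (sw n i x).
Proof.
apply/ffunP => j; rewrite !ffunE /=.
rewrite (modS_eq (ltn_ord j)) (modS_eq (ltn_ord i)).
rewrite /sw /sig /ev.
have hi := ltn_ord i; have hj := ltn_ord j.
change (j == i) with (nat_of_ord j == nat_of_ord i).
move: (nat_of_ord i) (nat_of_ord j) hi hj => ii jj hi hj.
splitall.
all: repeat match goal with H : is_true (_ == _) |- _ => move/eqP: H => H end.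
all: try subst; simpl in *.
all: try lia.
all: normx x.
all: lia.
Qed.

Definition pos (z : int) : int := if z < 0 then 0 else z.
Definition Cf (n a b : nat) (u v : int) : int :=
  pos (((u - v) %/ n%:Z)%Z + 1 - ((b <= a)%N : nat)%:Z).
Definition Phi (n : nat) (x : nat -> int) : int :=
  \sum_(a < n) \sum_(b < n) Cf n a b (x a) (x b).
Definition distinct (n : nat) (x : nat -> int) : Prop :=
  forall a b : nat, (a < n)%N -> (b < n)%N -> a <> b -> ~~ (n%:Z %| x a - x b)%Z.

Lemma sig_lt n i a : (2 <= n)%N -> (i < n)%N -> (a < n)%N -> (sig n i a < n)%N.
Proof. move=> *; rewrite /sig; splitall; lia. Qed.

Lemma sig_inv n i a : (2 <= n)%N -> (i < n)%N -> (a < n)%N -> sig n i (sig n i a) = a.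
Proof. move=> *; rewrite /sig; splitall; lia. Qed.

Lemma Phi_sw n i x : (2 <= n)%N -> (i < n)%N ->
  Phi n (sw n i x) = \sum_(a < n) \sum_(b < n)
     Cf n (sig n i a) (sig n i b) (x a + ev n i a) (x b + ev n i b).
Proof.
move=> n2 hi.
pose so (a : 'I_n) : 'I_n := Ordinal (@sig_lt n i a n2 hi (ltn_ord a)).
have so_inj : injective so.
  move=> a b /(congr1 val) /= e; apply/val_inj => /=.
  by rewrite -(@sig_inv n i a n2 hi (ltn_ord a)) e sig_inv.
rewrite /Phi (reindex_inj so_inj) /=; apply: eq_bigr => a _.
rewrite (reindex_inj so_inj) /=; apply: eq_bigr => b _.
by rewrite /sw !sig_inv.
Qed.

Lemma Cf_shift n a b a' b' u v e e' (t : int) : (0 < n)%N ->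
  e - e' = n%:Z * t -> ((b' <= a')%N : nat)%:Z - ((b <= a)%N : nat)%:Z = t ->
  Cf n a' b' (u + e) (v + e') = Cf n a b u v.
Proof.
move=> n0 h1 h2; rewrite /Cf.
have -> : u + e - (v + e') = t * n%:Z + (u - v) by rewrite mulrC -h1; ring.
rewrite divzMDl; last by rewrite eqz_nat -lt0n.
congr pos; lia.
Qed.

Lemma evfact n i a b : (2 <= n)%N -> (i < n)%N -> (a < n)%N -> (b < n)%N ->
  ~ ((a = (if i == 0%N then 0%N else i.-1) /\ b = (if i == 0%N then n.-1 else i)) \/
     (b = (if i == 0%N then 0%N else i.-1) /\ a = (if i == 0%N then n.-1 else i))) ->
  ev n i a - ev n i b = n%:Z * (((sig n i b <= sig n i a)%N : nat)%:Z - ((b <= a)%N : nat)%:Z).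
Proof.
move=> n2 hi ha hb; case: (i =P 0%N) => [->|/eqP/negbTE i0] /=; rewrite ?i0;
  move=> H; rewrite /ev /sig ?i0 /=; splitall; try lia.
Qed.

Lemma sum2_supp n (F : 'I_n -> 'I_n -> int) (p q : 'I_n) : p != q ->
  (forall a b, ~~ ((a == p) && (b == q)) -> ~~ ((a == q) && (b == p)) -> F a b = 0) ->
  \sum_a \sum_b F a b = F p q + F q p.
Proof.
move=> pq H.
rewrite (bigD1 p) //= (bigD1 q) //= big1 ?addr0; last first.
  move=> b nbq; apply: H; first by rewrite eqxx /= .
  by rewrite (negbTE pq).
rewrite (bigD1 q) /=; last by rewrite eq_sym.
rewrite (bigD1 p) //= big1 ?addr0; last first.
  move=> b nbp; apply: H; first by rewrite eq_sym (negbTE pq).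
  by rewrite eqxx.
rewrite big1 ?addr0 // => a /andP [ap aq]; apply: big1 => b _; apply: H.
  by rewrite (negbTE ap).
by rewrite (negbTE aq).
Qed.

Lemma divz_char (z q : int) (n : nat) : (0 < n)%N ->
  q * n%:Z <= z -> z < q * n%:Z + n%:Z -> (z %/ n%:Z)%Z = q.
Proof.
move=> n0 h1 h2.
have -> : z = q * n%:Z + (z - q * n%:Z) by ring.
rewrite divzMDl; last by rewrite eqz_nat -lt0n.
rewrite divz_small ?addr0 //; apply/andP; split; first lia.
rewrite gtz0_abs; lia.
Qed.

Lemma divz_bounds (z : int) (n : nat) : (0 < n)%N ->
  (z %/ n%:Z)%Z * n%:Z <= z /\ z < (z %/ n%:Z)%Z * n%:Z + n%:Z.
Proof.
move=> n0; have nz : n%:Z != 0 by rewrite eqz_nat -lt0n.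
have e := divz_eq z n%:Z; have h1 := modz_ge0 z nz.
have h2 : (z %% n%:Z)%Z < n%:Z by exact: ltz_mod.
split; lia.
Qed.

Lemma divzN1 (z : int) (n : nat) : (0 < n)%N -> ~~ (n%:Z %| z)%Z ->
  ((- z) %/ n%:Z)%Z = - (z %/ n%:Z)%Z - 1.
Proof.
move=> n0 nd; have [h1 h2] := divz_bounds z n0.
have h3 : (z %/ n%:Z)%Z * n%:Z != z.
  apply: contraNneq nd => <-; apply/dvdzP; by exists (z %/ n%:Z)%Z.
apply: divz_char => //; lia.
Qed.

Definition g (e : int) : int := pos e + pos (- e).

Lemma gstep (e : int) : (g (e + 1) = g e + 1 /\ 0 <= e) \/ (g (e + 1) = g e - 1 /\ e < 0).
Proof. rewrite /g /pos; splitall; lia. Qed.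

Lemma Phi_diff n i x : (2 <= n)%N -> (i < n)%N ->
  let p := (if i == 0%N then 0%N else i.-1) in let q := (if i == 0%N then n.-1 else i) in
  let G a b := Cf n (sig n i a) (sig n i b) (x a + ev n i a) (x b + ev n i b) - Cf n a b (x a) (x b) in
  Phi n (sw n i x) = Phi n x + (G p q + G q p).
Proof.
move=> n2 hi p q G.
have hp : (p < n)%N by rewrite /p; case: (boolP (i == 0%N)) => ? /=; lia.
have hq : (q < n)%N by rewrite /q; case: (boolP (i == 0%N)) => ? /=; lia.
have pq : Ordinal hp != Ordinal hq.
  apply/eqP => -[]. rewrite /p /q. case: (boolP (i == 0%N)) => ? /=; lia.
rewrite Phi_sw // -(sum2_supp (F := fun a b : 'I_n => G a b) pq); last first.
  move=> a b h1 h2; rewrite /G.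
  have ef : ev n i a - ev n i b = n%:Z * (((sig n i b <= sig n i a)%N : nat)%:Z - ((b <= a)%N : nat)%:Z).
    apply: evfact => //; try exact: ltn_ord.
    move=> [[e1 e2]|[e1 e2]].
      by move: h1; rewrite -!(inj_eq val_inj) /= e1 e2 /p /q !eqxx.
    by move: h2; rewrite -!(inj_eq val_inj) /= e1 e2 /p /q !eqxx.
  rewrite (@Cf_shift n a b _ _ _ _ _ _ _ _ ef) ?subrr //; lia.
rewrite /Phi -big_split /=; apply: eq_bigr => a _.
rewrite -big_split /=; apply: eq_bigr => b _; rewrite /G; ring.
Qed.

Lemma step_int n i x : (2 <= n)%N -> (1 <= i < n)%N -> distinct n x ->
  Phi n (sw n i x) = Phi n x + (g ((x i.-1 - x i) %/ n%:Z)%Z - g (((x i.-1 - x i) %/ n%:Z)%Z + 1)).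
Proof.
move=> n2 /andP [i1 hi] dx.
have := @Phi_diff n i x n2 hi; rewrite /= => ->.
have i0 : (i == 0%N) = false by apply/negbTE; lia.
have s1 : sig n i i.-1 = i by rewrite /sig i0 eqxx.
have s2 : sig n i i = i.-1 by rewrite /sig i0 eqxx; case: eqP.
have e0 : forall a, ev n i a = 0 by move=> a; rewrite /ev i0.
rewrite i0 s1 s2 !e0 !addr0.
have nd : ~~ (n%:Z %| x i.-1 - x i)%Z by apply: dx; lia.
rewrite /Cf.
have -> : x i - x i.-1 = - (x i.-1 - x i) by ring.
rewrite divzN1 //; last lia.
set d := ((x i.-1 - x i) %/ n%:Z)%Z.
rewrite /g /pos; splitall; lia.
Qed.

Lemma step_wrap n x : (2 <= n)%N -> distinct n x ->
  Phi n (sw n 0 x) = Phi n x + (g (((x 0%N - x n.-1) %/ n%:Z)%Z + 2) - g (((x 0%N - x n.-1) %/ n%:Z)%Z + 1)).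
Proof.
move=> n2 dx.
have := @Phi_diff n 0 x n2 (ltnW n2); rewrite /= => ->.
have s1 : sig n 0 0 = n.-1 by [].
have s2 : sig n 0 n.-1 = 0%N by rewrite /sig /= eqxx; case: eqP => //; lia.
have e1 : ev n 0 0 = n%:Z by [].
have e2 : ev n 0 n.-1 = - n%:Z by rewrite /ev /= eqxx; case: eqP => //; lia.
rewrite s1 s2 e1 e2.
have nd : ~~ (n%:Z %| x 0%N - x n.-1)%Z by apply: dx; lia.
have n0 : n%:Z != 0 by rewrite eqz_nat; lia.
rewrite /Cf.
have -> : x 0%N + n%:Z - (x n.-1 + - n%:Z) = 2 * n%:Z + (x 0%N - x n.-1) by ring.
have -> : x n.-1 + - n%:Z - (x 0%N + n%:Z) = (-2) * n%:Z + (- (x 0%N - x n.-1)) by ring.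
have -> : x n.-1 - x 0%N = - (x 0%N - x n.-1) by ring.
rewrite !divzMDl // divzN1 //; last lia.
set d := ((x 0%N - x n.-1) %/ n%:Z)%Z.
rewrite /g /pos; splitall; lia.
Qed.

Lemma pos_ge0 z : 0 <= pos z. Proof. rewrite /pos; case: ifP; lia. Qed.

Lemma Phi_ge0 n x : 0 <= Phi n x.
Proof. by apply: sumr_ge0 => a _; apply: sumr_ge0 => b _; rewrite /Cf pos_ge0. Qed.

Lemma ev_mul n i a : exists k : int, ev n i a = n%:Z * k.
Proof.
rewrite /ev; case: ifP => _; last by exists 0; ring.
case: ifP => _; first by exists 1; ring.
case: ifP => _; first by exists (-1); ring.
by exists 0; ring.
Qed.

Lemma dist_sw n i x : (2 <= n)%N -> (i < n)%N -> distinct n x -> distinct n (sw n i x).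
Proof.
move=> n2 hi dx a b ha hb ab; rewrite /sw.
have [k1 e1] := ev_mul n i (sig n i a); have [k2 e2] := ev_mul n i (sig n i b).
have hsa := @sig_lt n i a n2 hi ha; have hsb := @sig_lt n i b n2 hi hb.
have sab : sig n i a <> sig n i b.
  by move=> e; apply: ab; rewrite -(@sig_inv n i a n2 hi ha) e sig_inv.
have := dx _ _ hsa hsb sab; apply: contra => /dvdzP [q hq].
apply/dvdzP; exists (q - k1 + k2).
rewrite mulrDl mulrBl -hq e1 e2; ring.
Qed.

Lemma sref_inv n (i : 'I_n) (v : config n) : sref i (sref i v) = v.
Proof.
apply/ffunP => j; rewrite !ffunE eqxx.
by case: eqP => [->|_]; [rewrite opprK | ring].
Qed.

Lemma sw_le n i x : (2 <= n)%N -> (i < n)%N -> distinct n x ->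
  Phi n (sw n i x) <= Phi n x + 1.
Proof.
move=> n2 hi dx; case: (posnP i) => [->|i1].
  rewrite step_wrap //.
  set d := ((x 0%N - x n.-1) %/ n%:Z)%Z.
  have -> : d + 2 = (d + 1) + 1 by ring.
  have := gstep (d + 1); lia.
rewrite step_int //; last by rewrite i1.
set d := ((x i.-1 - x i) %/ n%:Z)%Z.
have := gstep d; lia.
Qed.

Lemma no_descent n x : (2 <= n)%N -> distinct n x ->
  (forall i, (i < n)%N -> Phi n (sw n i x) <> Phi n x - 1) ->
  (forall i, (1 <= i < n)%N -> x i.-1 < x i) /\ x n.-1 - x 0%N < n%:Z.
Proof.
move=> n2 dx H; split.
  move=> i /andP [i1 hi]; have := H i hi; rewrite step_int //; last by rewrite i1.
  set d := ((x i.-1 - x i) %/ n%:Z)%Z => h.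
  have hd : d < 0 by have := gstep d; lia.
  have := @divz_ge0 (x i.-1 - x i) n%:Z; rewrite -/d.
  have n0 : 0 < n%:Z by lia.
  move=> /(_ n0) e; have : ~~ (0 <= d) by rewrite -ltNge. rewrite e -ltNge; lia.
have := H 0%N (ltnW n2); rewrite step_wrap //.
set d := ((x 0%N - x n.-1) %/ n%:Z)%Z => h.
have hd : -1 <= d.
  have e : d + 2 = (d + 1) + 1 by ring.
  rewrite e in h; have := gstep (d + 1); lia.
have [b1 b2] := divz_bounds (x 0%N - x n.-1) (ltnW n2); rewrite -/d in b1 b2.
have nd : ~~ (n%:Z %| x 0%N - x n.-1)%Z by apply: dx; lia.
have ne : x 0%N - x n.-1 != - n%:Z.
  apply: contraNneq nd => ->; apply/dvdzP; exists (-1); ring.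
nia.
Qed.

Lemma chain_lin n x : (2 <= n)%N ->
  (forall i, (1 <= i < n)%N -> x i.-1 < x i) -> x n.-1 - x 0%N < n%:Z ->
  forall a, (a < n)%N -> x a = x 0%N + a%:Z.
Proof.
move=> n2 H Hw.
have A : forall a, (a < n)%N -> a%:Z <= x a - x 0%N.
  elim=> [|a IH] ha; first lia.
  have := H a.+1; rewrite /= => /(_ ha) h; have := IH (ltnW ha); lia.
have B : forall k, (k < n)%N -> k%:Z <= x n.-1 - x (n.-1 - k)%N.
  elim=> [|k IH] hk; first by rewrite subn0; lia.
  have h := H (n.-1 - k)%N.
  have e : (n.-1 - k).-1 = (n.-1 - k.+1)%N by lia.
  rewrite e in h; have := h (ltac:(lia)); have := IH (ltnW hk); lia.
move=> a ha; have := A a ha; have := B (n.-1 - a)%N (ltac:(lia)).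
have -> : (n.-1 - (n.-1 - a))%N = a by lia.
lia.
Qed.

Lemma Phi_lin n (c : int) x : (0 < n)%N -> (forall a, (a < n)%N -> x a = c + a%:Z) -> Phi n x = 0.
Proof.
move=> n0 hx; apply: big1 => a _; apply: big1 => b _.
rewrite !hx ?ltn_ord // /Cf.
have -> : c + a%:Z - (c + b%:Z) = a%:Z - b%:Z by ring.
have ha := ltn_ord a; have hb := ltn_ord b.
case: (ltnP a b) => ab.
  have -> : ((a%:Z - b%:Z) %/ n%:Z)%Z = -1 by apply: divz_char => //; lia.
  by rewrite /pos; splitall; lia.
have -> : ((a%:Z - b%:Z) %/ n%:Z)%Z = 0 by apply: divz_char => //; lia.
by rewrite /pos; splitall; lia.
Qed.

Lemma Dx_lin n (c : int) x : (0 < n)%N -> (forall a, (a < n)%N -> x a = c + a%:Z) -> Dx n x = ones n.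
Proof.
move=> n0 hx; apply/ffunP => j; rewrite !ffunE.
have hj := ltn_ord j.
case: eqP => [e|e].
  rewrite !hx ?e //; last lia.
  have -> : (n.-1 : int) = n%:Z - 1 by lia.
  ring.
rewrite !hx //; last lia.
have -> : ((j.-1)%N : int) = (j : int) - 1 by lia.
ring.
Qed.

Lemma Phi_eq n x y : (forall a b, (a < n)%N -> (b < n)%N -> x a - x b = y a - y b) -> Phi n x = Phi n y.
Proof.
move=> H; apply: eq_bigr => a _; apply: eq_bigr => b _.
by rewrite /Cf H ?ltn_ord.
Qed.

Lemma Dx_diff n x y : (0 < n)%N -> Dx n x = Dx n y ->
  forall a, (a < n)%N -> x a - y a = x 0%N - y 0%N.
Proof.
move=> n0 e; elim=> [|a IH] ha //.
have := congr1 (fun f : config n => f (Ordinal ha)) e; rewrite /= !ffunE /=.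
have := IH (ltnW ha); lia.
Qed.

Lemma upper n x : (2 <= n)%N -> distinct n x ->
  exists w : seq 'I_n, (size w)%:Z = Phi n x /\ word_act w (ones n) = Dx n x.
Proof.
move=> n2; have [m em] : exists m : nat, Phi n x = m%:Z.
  by exists (absz (Phi n x)); rewrite gez0_abs // Phi_ge0.
elim: m x em => [|m IH] x em dx.
- case: (boolP [exists i : 'I_n, Phi n (sw n i x) == Phi n x - 1]).
    move=> /existsP [i /eqP h]; have := Phi_ge0 n (sw n i x); lia.
  move=> /existsPn H.
  have [c1 c2] := no_descent n2 dx (fun i hi => ltac:(move: (H (Ordinal hi)) => /eqP //)).
  have hl := chain_lin n2 c1 c2.
  exists [::]; split; first by rewrite em.
  by rewrite (Dx_lin (ltnW n2) hl).
- case: (boolP [exists i : 'I_n, Phi n (sw n i x) == Phi n x - 1]).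
    move=> /existsP [i /eqP h].
    have [w [sw1 sw2]] := IH (sw n i x) (ltac:(lia)) (dist_sw n2 (ltn_ord i) dx).
    exists (i :: w); split; first by rewrite /=; lia.
    by rewrite /= sw2 -swapD // sref_inv.
  move=> /existsPn H.
  have [c1 c2] := no_descent n2 dx (fun i hi => ltac:(move: (H (Ordinal hi)) => /eqP //)).
  have hl := chain_lin n2 c1 c2.
  by move: em; rewrite (Phi_lin (ltnW n2) hl); lia.
Qed.

Lemma lower n (w : seq 'I_n) : (2 <= n)%N ->
  exists x, distinct n x /\ Dx n x = word_act w (ones n) /\ Phi n x <= (size w)%:Z.
Proof.
move=> n2; elim: w => [|i w [x [dx [e le]]]].
  exists (fun a => a%:Z); split; last split.
  - move=> a b ha hb ab; apply/negP => /dvdzP [k hk].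
    have : k = 0 by nia.
    move=> k0; rewrite k0 in hk; lia.
  - by apply: (@Dx_lin n 0) => [|a _]; [lia|ring].
  - rewrite (@Phi_lin n 0) //; lia.
exists (sw n i x); split; last split.
- exact: dist_sw (ltn_ord i) dx.
- by rewrite /= -e swapD.
- have := sw_le n2 (ltn_ord i) dx; rewrite /=; lia.
Qed.

Lemma per_nat n (s : int -> int) : (forall t, s (t + n%:Z) = s t + n%:Z) ->
  forall (k : nat) t, s (t + k%:Z * n%:Z) = s t + k%:Z * n%:Z.
Proof.
move=> per; elim=> [|k IH] t; first by rewrite mul0r !addr0.
have -> : t + k.+1%:Z * n%:Z = (t + k%:Z * n%:Z) + n%:Z by lia.
rewrite per IH; lia.
Qed.

Lemma per_int n (s : int -> int) : (forall t, s (t + n%:Z) = s t + n%:Z) ->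
  forall (k : int) t, s (t + k * n%:Z) = s t + k * n%:Z.
Proof.
move=> per k t; case: k => m; first exact: per_nat.
have := per_nat per m.+1 (t + Negz m * n%:Z).
have -> : t + Negz m * n%:Z + m.+1%:Z * n%:Z = t by rewrite NegzE; ring.
move=> ->; rewrite NegzE; ring.
Qed.

Lemma inj_mod n (s : int -> int) : (0 < n)%N -> (forall t, s (t + n%:Z) = s t + n%:Z) ->
  injective s -> forall a b : int, `|a - b| < n%:Z -> (n%:Z %| s a - s b)%Z -> a = b.
Proof.
move=> n0 per inj a b hab /dvdzP [q hq].
have : s a = s (b + q * n%:Z) by rewrite per_int //; lia.
move/inj => e.
have : q = 0.
  rewrite e in hab; move: hab; rewrite addrAC subrr add0r.
  have n0p : 0 < n%:Z by lia.
  case: (ger0P (q * n%:Z)) => h1 h2.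
  - have : 0 <= q by nia. have : q < 1 by nia. lia.
  - have : q < 0 by nia. have : -1 < q by nia. lia.
move=> q0; rewrite e q0; ring.
Qed.

Definition ind (b : bool) : int := (b : nat)%:Z.

Lemma count_int (T : Type) (p : pred T) (l : seq T) :
  (count p l)%:Z = \sum_(k <- l) ind (p k).
Proof. elim: l => [|y l IH]; first by rewrite big_nil. by rewrite big_cons /= -IH /ind; lia. Qed.

Lemma sum_delta (F : nat -> int) m p a0 : (m <= a0 < p)%N ->
  (forall a, (m <= a < p)%N -> a != a0 -> F a = 0) -> \sum_(m <= a < p) F a = F a0.
Proof.
move=> /andP [h1 h2] H.
rewrite (big_cat_nat h1 (ltnW h2)) /=.
rewrite (big_ltn h2) [X in X + _]big1_seq ?add0r; last first.
  move=> a /andP [_]; rewrite mem_index_iota => ha; apply: H; lia.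
rewrite [X in _ + X]big1_seq ?addr0 // => a /andP [_]; rewrite mem_index_iota => ha; apply: H; lia.
Qed.

Lemma complete n (s : int -> int) : (0 < n)%N -> (forall t, s (t + n%:Z) = s t + n%:Z) ->
  bijective s -> forall t, \sum_(1 <= a < n.+1) ind (n%:Z %| t - s a)%Z = 1.
Proof.
move=> n0 per [h hK Kh] t.
set y := h t.
set r := (((y - 1) %% n%:Z)%Z).
have nz : n%:Z != 0 by lia.
have r0 : 0 <= r by exact: modz_ge0.
have r1 : r < n%:Z by exact: (ltz_mod (y - 1) nz).
have ey := divz_eq (y - 1) n%:Z; rewrite -/r in ey.
have ht : t = s (r + 1 + ((y - 1) %/ n%:Z)%Z * n%:Z).
  by rewrite -{1}(Kh t) -/y; congr s; lia.
have sa : (n%:Z %| t - s (r + 1))%Z.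
  by rewrite ht per_int //; apply/dvdzP; exists ((y - 1) %/ n%:Z)%Z; ring.
rewrite (@sum_delta _ _ _ (absz r).+1); last first.
- move=> a ha ne; rewrite /ind; case: (boolP (n%:Z %| t - s a)%Z) => //= da.
  exfalso; move/negP: ne; apply; apply/eqP.
  have : (a : int) = r + 1.
    apply: (inj_mod n0 per (can_inj hK)); first lia.
    have -> : s a - s (r + 1) = (t - s (r + 1)) - (t - s a) by ring.
    by rewrite rpredB.
  lia.
- lia.
- have -> : ((absz r).+1 : int) = r + 1 by lia.
  by rewrite /ind sa.
Qed.

Lemma pos_id z : 0 <= z -> pos z = z. Proof. by rewrite /pos; case: ifP; lia. Qed.
Lemma pos_0 z : z <= 0 -> pos z = 0. Proof. by rewrite /pos; case: ifP; lia. Qed.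

Lemma divz_nn (z : int) (n : nat) : (0 < n)%N -> 0 <= z -> 0 <= (z %/ n%:Z)%Z.
Proof. by move=> n0 hz; rewrite divz_ge0 //; lia. Qed.

Lemma divz_ng (z : int) (n : nat) : (0 < n)%N -> z < 0 -> (z %/ n%:Z)%Z <= -1.
Proof.
move=> n0 hz; have := @divz_ge0 z n%:Z; rewrite (_ : 0 < n%:Z); last by lia.
move=> /(_ isT) e; have : ~~ (0 <= (z %/ n%:Z)%Z) by rewrite e -ltNge.
rewrite -ltNge; lia.
Qed.

Lemma Phi_nat n x : Phi n x = \sum_(0 <= a < n) \sum_(0 <= b < n) Cf n a b (x a) (x b).
Proof. by rewrite /Phi big_mkord; apply: eq_bigr => a _; rewrite big_mkord. Qed.

Lemma Phi_dom n (s : int -> int) : (2 <= n)%N -> (forall t, s (t + n%:Z) = s t + n%:Z) ->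
  dominant n s ->
  Phi n (fun a => s (Posz a)) =
  \sum_(1 <= b < n.+1) \sum_(1 <= a < b) ((s (Posz b) - s (Posz a)) %/ n%:Z)%Z.
Proof.
move=> n2 per dom.
have n0 : (0 < n)%N by lia.
have nz : n%:Z != 0 by lia.
have s0 : s (Posz 0%N) = s (Posz n) - n%:Z by have := per (Posz 0%N); rewrite add0r; lia.
rewrite Phi_nat (big_ltn n0) (big_ltn n0) /Cf subrr div0z /= pos_0 // add0r.
rewrite (big_nat_recr n 1) /=; last lia.
have R0 : \sum_(1 <= b < n) pos (((s (Posz 0%N) - s (Posz b)) %/ n%:Z)%Z + 1 - ((b <= 0)%N : nat)%:Z)
   = \sum_(1 <= a < n) ((s (Posz n) - s (Posz a)) %/ n%:Z)%Z.
  apply: eq_big_nat => b /andP [b1 bn].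
  have -> : s (Posz 0%N) - s (Posz b) = (-1) * n%:Z + (s (Posz n) - s (Posz b)) by rewrite s0; ring.
  rewrite divzMDl // (_ : (b <= 0)%N = false) /=; last lia.
  rewrite pos_id; first ring.
  have := dom b n b1 bn (leqnn n); move=> h; have := @divz_nn (s (Posz n) - s (Posz b)) n n0; lia.
have RA : \sum_(1 <= a < n) \sum_(0 <= b < n) pos (((s (Posz a) - s (Posz b)) %/ n%:Z)%Z + 1 - ((b <= a)%N : nat)%:Z)
   = \sum_(1 <= b < n) \sum_(1 <= a < b) ((s (Posz b) - s (Posz a)) %/ n%:Z)%Z.
  apply: eq_big_nat => a /andP [a1 an].
  rewrite (big_ltn n0) /=.
  have -> : s (Posz a) - s (Posz 0%N) = 1 * n%:Z + (s (Posz a) - s (Posz n)) by rewrite s0; ring.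
  rewrite divzMDl // pos_0; last first.
    have := dom a n a1 an (leqnn n) => h; have := @divz_ng (s (Posz a) - s (Posz n)) n n0; lia.
  rewrite add0r (big_cat_nat (n := a)) /=; [|lia|lia].
  rewrite [X in _ + X](_ : _ = 0) ?addr0; last first.
    rewrite big_nat_cond; apply: big1 => b /andP [/andP [ab bn] _].
    case: (ltngtP a b) ab => // [ab|->] _.
      rewrite pos_0 //.
      have := dom a b a1 ab (ltnW bn) => h; have := @divz_ng (s (Posz a) - s (Posz b)) n n0; case: (leqP b a) => /= ? ?; lia.
    by rewrite subrr div0z /= ?leqnn /= pos_0.
  apply: eq_big_nat => b /andP [b1 ba].
  have := dom b a b1 ba (ltnW an) => h; have := @divz_nn (s (Posz a) - s (Posz b)) n n0.
  case: (leqP b a) => ? ?; last lia.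
  rewrite pos_id /=; first ring. lia.
rewrite R0 RA; ring.
Qed.

Lemma exch (F : nat -> nat -> int) m :
  \sum_(1 <= a < m.+1) \sum_(a <= i < m.+1) F i a = \sum_(1 <= i < m.+1) \sum_(1 <= a < i.+1) F i a.
Proof.
elim: m => [|m IH]; first by rewrite !big_geq.
have L : \sum_(1 <= a < m.+2) \sum_(a <= i < m.+2) F i a =
   \sum_(1 <= a < m.+1) \sum_(a <= i < m.+1) F i a + \sum_(1 <= a < m.+2) F m.+1 a.
  rewrite (big_nat_recr m.+1 1) //= big_nat1 [X in _ = _ + X](big_nat_recr m.+1 1) //= addrA.
  congr (_ + _); rewrite -big_split /=.
  by apply: eq_big_nat => a /andP [a1 am]; rewrite (big_nat_recr m.+1 a) //; lia.
by rewrite L IH [RHS](big_nat_recr m.+1 1).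
Qed.

Lemma tri (F : nat -> nat -> int) m :
  \sum_(1 <= b < m.+1) \sum_(1 <= a < b) \sum_(a <= i < b) F i a =
  \sum_(1 <= i < m) ((m - i)%N%:Z) * \sum_(1 <= a < i.+1) F i a.
Proof.
elim: m => [|m IH]; first by rewrite !big_geq.
rewrite (big_nat_recr m.+1 1) //= IH exch.
have -> : \sum_(1 <= i < m.+1) ((m.+1 - i)%N%:Z) * \sum_(1 <= a < i.+1) F i a =
   \sum_(1 <= i < m.+1) (((m - i)%N%:Z) * \sum_(1 <= a < i.+1) F i a + \sum_(1 <= a < i.+1) F i a).
  apply: eq_big_nat => i /andP [i1 im].
  rewrite subSn; last lia.
  rewrite -addn1 PoszD; ring.
rewrite big_split /=; congr (_ + _).
case: m {IH} => [|m]; first by rewrite !big_geq.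
by rewrite (big_nat_recr m.+1 1) //= subnn mul0r addr0.
Qed.

Lemma floor_step (z : int) n : (0 < n)%N ->
  (((z + 1) %/ n%:Z)%Z - (z %/ n%:Z)%Z) = ind (n%:Z %| z + 1)%Z.
Proof.
move=> n0; have [b1 b2] := divz_bounds z n0; set q := (z %/ n%:Z)%Z in b1 b2 *.
case: (z + 1 =P q * n%:Z + n%:Z) => e.
  rewrite (@divz_char _ (q + 1)) //; try lia.
  have -> : (n%:Z %| z + 1)%Z by apply/dvdzP; exists (q + 1); lia.
  rewrite /ind /=; ring.
rewrite (@divz_char _ q) //; try lia.
have -> : (n%:Z %| z + 1)%Z = false.
  apply/negP => /dvdzP [k hk].
  have : q < k by nia.
  have : k < q + 1 by nia.
  lia.
rewrite /ind /=; ring.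
Qed.

Lemma floor_count n (u c : int) (d : nat) : (0 < n)%N ->
  (((u + d%:Z - c) %/ n%:Z)%Z - ((u - c) %/ n%:Z)%Z) =
  (count (fun k : nat => (n%:Z %| u + 1 + k%:Z - c)%Z) (iota 0 d))%:Z.
Proof.
move=> n0; elim: d => [|d IH]; first by rewrite addr0 subrr.
have -> : iota 0 d.+1 = iota 0 d ++ [:: d] by rewrite -addn1 iotaD.
rewrite count_cat /= addn0 PoszD -IH.
have e1 : u + (d.+1)%:Z - c = (u + d%:Z - c) + 1 by lia.
have e2 : u + 1 + d%:Z - c = (u + d%:Z - c) + 1 by lia.
rewrite e1 e2; have := floor_step (u + d%:Z - c) n0; rewrite /ind; lia.
Qed.

Lemma all_not (T : Type) (P : pred T) (l : seq T) :
  all (fun j => ~~ P j) l = (count P l == 0)%N.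
Proof. by elim: l => //= y l ->; case: (P y). Qed.

Lemma per_k n (s : int -> int) i t : (2 <= n)%N -> (forall t, s (t + n%:Z) = s t + n%:Z) ->
  bijective s -> (1 <= i < n)%N -> t < s (Posz i.+1) ->
  \sum_(1 <= a < i.+1) ind (n%:Z %| t - s (Posz a))%Z = ind (in_U n s i t).
Proof.
move=> n2 per bij /andP [i1 hi] ht.
have := complete (ltnW n2) per bij t.
rewrite (big_cat_nat (n := i.+1)) //=; last lia.
have hB : \sum_(i.+1 <= a < n.+1) ind (n%:Z %| t - s (Posz a))%Z =
   (count (fun j : nat => (n%:Z %| t - s (Posz j))%Z) (iota i.+1 (n - i)))%:Z.
  by rewrite count_int /index_iota subSS.
rewrite hB /in_U ht /= all_not.
have A0 : 0 <= \sum_(1 <= a < i.+1) ind (n%:Z %| t - s (Posz a))%Z.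
  by apply: sumr_ge0 => a _; rewrite /ind.
move: A0; set A := \sum_(1 <= a < i.+1) _.
case: (count _ _ =P 0%N) => [->|c0] /=; rewrite /ind /=; lia.
Qed.

Lemma gamma_eq n (s : int -> int) i : (2 <= n)%N -> (forall t, s (t + n%:Z) = s t + n%:Z) ->
  bijective s -> dominant n s -> (1 <= i < n)%N ->
  \sum_(1 <= a < i.+1) (((s (Posz i.+1) - s (Posz a)) %/ n%:Z)%Z - ((s (Posz i) - s (Posz a)) %/ n%:Z)%Z)
  = (gamma n s i)%:Z.
Proof.
move=> n2 per bij dom /andP [i1 hi].
have n0 : (0 < n)%N by lia.
have hd := dom i i.+1 i1 (ltnSn i) hi.
set L := absz (s (Posz i.+1) - s (Posz i) - 1)%R.
have hL : L%:Z = s (Posz i.+1) - s (Posz i) - 1 by rewrite /L gez0_abs //; lia.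
have inj : injective s by case: bij => h hK _; exact: can_inj hK.
have E : forall a, (1 <= a < i.+1)%N ->
  ((s (Posz i.+1) - s (Posz a)) %/ n%:Z)%Z - ((s (Posz i) - s (Posz a)) %/ n%:Z)%Z =
  (count (fun k : nat => (n%:Z %| s (Posz i) + 1 + k%:Z - s (Posz a))%Z) (iota 0 L))%:Z.
  move=> a /andP [a1 ai].
  have -> : s (Posz i.+1) - s (Posz a) = s (Posz i) + (L.+1)%:Z - s (Posz a) by lia.
  rewrite floor_count //.
  have -> : iota 0 L.+1 = iota 0 L ++ [:: L] by rewrite -addn1 iotaD.
  rewrite count_cat /=.
  have -> : (n%:Z %| s (Posz i) + 1 + L%:Z - s (Posz a))%Z = false.
    apply/negP => dv.
    have : Posz i.+1 = Posz a.
      apply: (inj_mod n0 per inj); first lia.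
      by have -> : s (Posz i.+1) - s (Posz a) = s (Posz i) + 1 + L%:Z - s (Posz a) by lia.
    lia.
  by rewrite /= !addn0.
rewrite (eq_big_nat _ _ E).
under eq_big_nat => a _ do rewrite count_int.
rewrite exchange_big /= /gamma -/L count_int.
rewrite big_seq [RHS]big_seq; apply: eq_bigr => k; rewrite mem_iota => /andP [_ hk].
apply: per_k => //; first by rewrite i1.
lia.
Qed.

Lemma Dx_dpart n (s : int -> int) : (0 < n)%N -> (forall t, s (t + n%:Z) = s t + n%:Z) ->
  Dx n (fun a => s (Posz a)) = dpart n s.
Proof.
move=> n0 per; apply/ffunP => j; rewrite !ffunE.
case: eqP => e.
  have : s (Posz n.-1) = s (Posz j - 1) + n%:Z by rewrite -per; congr s; lia.
  lia.
by have -> : Posz (j.-1) = Posz j - 1 by lia.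
Qed.

Lemma dist_xs n (s : int -> int) : (0 < n)%N -> (forall t, s (t + n%:Z) = s t + n%:Z) ->
  injective s -> distinct n (fun a => s (Posz a)).
Proof.
move=> n0 per inj a b ha hb ab; apply/negP => dv.
have := inj_mod n0 per inj (a := Posz a) (b := Posz b) (ltac:(lia)) dv; lia.
Qed.

Lemma Posz_sum (l : seq nat) (f : nat -> nat) : (\sum_(i <- l) f i)%N%:Z = \sum_(i <- l) (f i)%:Z.
Proof. by elim: l => [|y l IH]; rewrite ?big_nil // !big_cons PoszD IH. Qed.

Lemma tele (S : nat -> int) (n : nat) a b : (a <= b)%N ->
  ((S b - S a) %/ n%:Z)%Z = \sum_(a <= i < b) (((S i.+1 - S a) %/ n%:Z)%Z - ((S i - S a) %/ n%:Z)%Z).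
Proof.
move=> ab; rewrite (telescope_sumr (fun k => ((S k - S a) %/ n%:Z)%Z) ab).
by rewrite subrr div0z subr0.
Qed.

Lemma Phi_K n (s : int -> int) : (2 <= n)%N -> (forall t, s (t + n%:Z) = s t + n%:Z) ->
  bijective s -> dominant n s ->
  Phi n (fun a => s (Posz a)) = (\sum_(1 <= i < n) (n - i) * gamma n s i)%N%:Z.
Proof.
move=> n2 per bij dom.
rewrite Phi_dom //.
pose S (k : nat) := s (Posz k).
have -> : \sum_(1 <= b < n.+1) \sum_(1 <= a < b) ((s (Posz b) - s (Posz a)) %/ n%:Z)%Z =
  \sum_(1 <= b < n.+1) \sum_(1 <= a < b) \sum_(a <= i < b) (((S i.+1 - S a) %/ n%:Z)%Z - ((S i - S a) %/ n%:Z)%Z).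
  apply: eq_big_nat => b _; apply: eq_big_nat => a /andP [_ ab].
  exact: (tele S n (ltnW ab)).
rewrite (tri (fun i a => (((S i.+1 - S a) %/ n%:Z)%Z - ((S i - S a) %/ n%:Z)%Z)) n).
rewrite Posz_sum; apply: eq_big_nat => i /andP [i1 hi].
rewrite PoszM; congr (_ * _).
by apply: gamma_eq => //; rewrite i1.
Qed.

Local Close Scope ring_scope.

Theorem proposition5p3 (n : nat) (hn : (2 <= n)%N) (s : int -> int) :
  affine_perm n s -> dominant n s ->
  is_length n s (\sum_(1 <= i < n) (n - i) * gamma n s i)%N.
Proof.
move=> [bij [per _]] dom.
have n0 : (0 < n)%N by lia.
have inj : injective s by case: bij => h hK _; exact: can_inj hK.
set K := (\sum_(1 <= i < n) (n - i) * gamma n s i)%N.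
have PK := Phi_K hn per bij dom; rewrite -/K in PK.
have dx := dist_xs n0 per inj.
have DD := Dx_dpart n0 per.
split.
  have [w [hw ew]] := upper hn dx.
  exists w; split; last by rewrite ew DD.
  by apply/eqP; rewrite -eqz_nat hw PK.
move=> w ew.
have [x [dx' [ex le]]] := lower w hn.
rewrite ew -DD in ex.
have hd := Dx_diff n0 ex.
have : Phi n x = Phi n (fun a => s (Posz a)).
  by apply: Phi_eq => a b ha hb; have := hd a ha; have := hd b hb; lia.
rewrite PK => e; rewrite e in le; lia.
Qed.
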